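(* Let $G$ be a mean-payoff game with limited-observation and $\Gamma_G$ its associated reachability game. If $\lambda$ is a winning strategy for Adam or for Eve in $\Gamma_G$, then there exists $N\in\mathbb{N}$ such that every play $\pi$ in $\Gamma_G$ consistent with $\lambda$ has length $|\pi|\le N$.
   Context: An MPG with limited-observation is a tuple $G=\langle Q,q_I,\Sigma,\Delta,w,Obs\rangle$: $Q$ finite, $q_I\in Q$, $\Sigma$ finite, $\Delta\subseteq Q\times\Sigma\times Q$ total, $w:\Delta\to\mathbb{Z}$, $Obs$ a partition of $Q$ with $\{q_I\}\in Obs$ and $\mathrm{post}_\sigma(o)=\{q':\exists q\in o,(q,\sigma,q')\in\Delta\}$ a union of elements of $Obs$ for all $o,\sigma$. Reachability game $\Gamma_G$: $\mathcal{F}$ is the set of $f:Q\to\mathbb{Z}\cup\{+\infty,\bot\}$, $\mathrm{supp}(f)=\{q:f(q)\ne\bot\}$; $f'$ is a $\sigma$-successor of $f$ if $\mathrm{supp}(f')\in Obs$, $\mathrm{supp}(f')\subseteq\mathrm{post}_\sigma(\mathrm{supp}(f))$ and each $f'(q)$, $q\in\mathrm{supp}(f')$, is $\min\{f(q')+w(q',\sigma,q):q'\in\mathrm{supp}(f),(q',\sigma,q)\in\Delta\}$ or $+\infty$. $f\preceq_k f'$ iff $\mathrm{supp}(f)=\mathrm{supp}(f')$ and $f(q)+k\le f'(q)$ on the support ($+\infty+k=+\infty$). $f_I(q_I)=0$, else $\bot$. $\Pi_G$: sequences $f_0\sigma_0\ldots f_n$ with $f_0=f_I$, $f_{i+1}$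 a $\sigma_i$-successor of $f_i$, and $f_i\not\preceq_0f_j$, $f_j\not\preceq_1 f_i$ for $0\le i<j<n$. $\mathcal{T}_\exists$: such sequences with $f_i\preceq_0 f_n$ for some $i<n$; $\mathcal{T}_\forall$: such sequences with, for some $i<n$, $f_n\preceq_1 f_i$ and $f_i(q)\ne+\infty$ for some $q\in\mathrm{supp}(f_i)$. $\Gamma_G$ is played on the tree $\Pi_G$ from $f_I$: at the current sequence $x$, Eve picks $\sigma\in\Sigma$ and Adam picks $f$ with $x\sigma f\in\Pi_G$; the play stops (as a finite play) once it reaches $\mathcal{T}_\exists$ (Eve wins) or $\mathcal{T}_\forall$ (Adam wins); otherwise it may be infinite and won by nobody. A strategy is winning for Eve (Adam) if every play consistent with it reaches $\mathcal{T}_\exists$ ($\mathcal{T}_\forall$). *)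

(* Defs.v *)
From mathcomp Require Import all_boot all_order all_algebra.
Set Implicit Arguments. Unset Strict Implicit. Unset Printing Implicit Defensive.
Import Order.TTheory GRing.Theory Num.Theory.
Local Open Scope ring_scope.

Inductive ext := Bot | Fin of int | PInf.

Definition isbot (e : ext) : bool := if e is Bot then true else false.
Definition isinf (e : ext) : bool := if e is PInf then true else false.

Definition eadd (e : ext) (k : int) : ext :=
  match e with Fin z => Fin (z + k) | x => x end.

Definition emin (x y : ext) : ext :=
  match x, y with
  | Fin a, Fin b => Fin (Order.min a b)
  | Fin a, _ => Fin a
  | _, Fin b => Fin b
  | PInf, _ => y
  | Bot, _ => y
  end.

Definition ele (x y : ext) : bool :=
  match x, y with
  | _, PInf => true
  | Fin a, Fin b => a <= b
  | _, _ => false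
  end.

Record mpglo := MPGLO {
  Q : finType;
  qI : Q;
  Sig : finType;
  Delta : Q -> Sig -> Q -> bool;
  wt : Q -> Sig -> Q -> int;          (* weights (only used on Delta) *)
  Obs : {set {set Q}}
}.

Section Game.
Variable G : mpglo.
Local Notation Q := (Q G).
Local Notation Sig := (Sig G).
Local Notation Delta := (@Delta G).
Local Notation Obs := (Obs G).

Definition post (s : Sig) (o : {set Q}) : {set Q} :=
  [set q' | [exists q in o, Delta q s q']].

Definition wf_mpglo : Prop :=
  (forall q s, exists q', Delta q s q') /\
  partition Obs [set: Q] /\
  [set @qI G] \in Obs /\
  (forall o s, o \in Obs -> exists2 U : {set {set Q}}, U \subset Obs & post s o = cover U).

Definition F := Q -> ext.

Definition supp (f : F) : {set Q} := [set q | ~~ isbot (f q)].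

Definition minval (f : F) (s : Sig) (q : Q) : ext :=
  \big[emin/PInf]_(q' | (q' \in supp f) && Delta q' s q) eadd (f q') (@wt G q' s q).

Definition successor (f : F) (s : Sig) (f' : F) : Prop :=
  supp f' \in Obs /\ supp f' \subset post s (supp f) /\
  (forall q, q \in supp f' -> f' q = minval f s q \/ f' q = PInf).

Definition preceq (k : int) (f f' : F) : Prop :=
  supp f = supp f' /\ (forall q, q \in supp f -> ele (eadd (f q) k) (f' q)).

Definition fI : F := fun q => if q == @qI G then Fin 0 else Bot.

(* A history f_0 s_0 f_1 ... s_{n-1} f_n with f_0 = fI is represented by the
   list [:: (s_0, f_1); ...; (s_{n-1}, f_n)]; its length n is the size. *)
Definition hist := seq (Sig * F).

Definition fseq (h : hist) : seq F := fI :: map snd h.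
Definition fat (h : hist) (i : nat) : F := nth fI (fseq h) i.

Fixpoint succ_path (f : F) (h : hist) : Prop :=
  match h with
  | [::] => True
  | (s, f') :: h' => successor f s f' /\ succ_path f' h'
  end.

Definition inPi (h : hist) : Prop :=
  succ_path fI h /\
  (forall i j, (i < j)%N -> (j < size h)%N ->
     ~ preceq 0 (fat h i) (fat h j) /\ ~ preceq 1 (fat h j) (fat h i)).

Definition TE (h : hist) : Prop :=
  inPi h /\ exists2 i, (i < size h)%N & preceq 0 (fat h i) (fat h (size h)).

Definition TA (h : hist) : Prop :=
  inPi h /\ exists2 i, (i < size h)%N &
    preceq 1 (fat h (size h)) (fat h i) /\
    exists2 q, q \in supp (fat h i) & fat h i q <> PInf.

Inductive strategy :=
  | EveStrat of (hist -> Sig)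
  | AdamStrat of (hist -> Sig -> F).

Definition move_ok (l : strategy) (x : hist) (s : Sig) (f : F) : Prop :=
  ~ TE x /\ ~ TA x /\ inPi (rcons x (s, f)) /\
  match l with
  | EveStrat e => s = e x
  | AdamStrat a => f = a x s
  end.

Definition consistent (l : strategy) (h : hist) : Prop :=
  forall h1 s f h2, h = h1 ++ (s, f) :: h2 -> move_ok l h1 s f.

Inductive play :=
  | FinPlay of hist
  | InfPlay of (nat -> Sig * F).

Definition is_play (l : strategy) (p : play) : Prop :=
  match p with
  | FinPlay h => consistent l h /\ ~ (exists s f, move_ok l h s f)
  | InfPlay u => forall n, move_ok l (mkseq u n) (u n).1 (u n).2
  end.

Definition reaches (T : hist -> Prop) (p : play) : Prop :=
  match p with
  | FinPlay h => exists2 i, (i <= size h)%N & T (take i h)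
  | InfPlay u => exists n, T (mkseq u n)
  end.

Definition winning (l : strategy) : Prop :=
  match l with
  | EveStrat _ => forall p, is_play l p -> reaches TE p
  | AdamStrat _ => forall p, is_play l p -> reaches TA p
  end.

Definition play_len_le (p : play) (N : nat) : Prop :=
  match p with
  | FinPlay h => (size h <= N)%N
  | InfPlay _ => False
  end.

End Game.

(* Main.v *)
Require Import Defs.
From mathcomp Require Import all_boot all_order all_algebra.
From Stdlib Require Import Classical ClassicalEpsilon FunctionalExtensionality.

Definition encf {G : mpglo} (g : F G) (s : Sig G) (S B : {set Q G}) : F G :=
  fun q => if q \in S then (if q \in B then PInf else minval g s q) else Bot.

Lemma succ_path_rcons {G : mpglo} (g : F G) (h : hist G) c :
  succ_path g (rcons h c) -> successor (last g (map snd h)) c.1 c.2.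
Proof.
elim: h g => [|[s f] h IH] g /=.
  by case: c => s f /= [].
by case=> _ /IH.
Qed.

Lemma succ_enc {G : mpglo} (g : F G) s (f : F G) :
  successor g s f -> f = encf g s (supp f) [set q | isinf (f q)].
Proof.
case=> _ [_ Hv]; apply: functional_extensionality => q; rewrite /encf.
case: ifP => Hq.
  rewrite inE; case: (Hv q Hq) => ->; last by [].
  by case: (minval g s q).
by move: Hq; rewrite inE; case: (f q).
Qed.

Lemma mkseqS (T : Type) (u : nat -> T) n : mkseq u n.+1 = rcons (mkseq u n) (u n).
Proof. by rewrite /mkseq -addn1 iotaD map_cat /= cats1. Qed.

Definition Pext {G : mpglo} (l : strategy G) (h : hist G) : Prop :=
  forall n, exists t, consistent l (h ++ t) /\ (n <= size t)%N.

Lemma step {G : mpglo} (l : strategy G) (h : hist G) :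
  Pext l h -> exists c : Sig G * F G, move_ok l h c.1 c.2 /\ Pext l (rcons h c).
Proof.
move=> Ph; apply: NNPP => Hn.
pose K := (Sig G * {set Q G} * {set Q G})%type.
pose g := last (@fI G) (map snd h).
pose enc (k : K) : Sig G * F G := (k.1.1, encf g k.1.1 k.1.2 k.2).
have Hb : forall k : K, exists n, forall t, consistent l (rcons h (enc k) ++ t) -> (size t < n)%N.
  move=> k; have := not_ex_all_not _ _ Hn (enc k).
  move=> /not_and_or [Hm|HP].
    exists 0%N => t Hc; exfalso; apply: Hm.
    by apply: (Hc h); rewrite cat_rcons.
  have [n Hn'] := not_all_ex_not _ _ HP; exists n => t Hc.
  rewrite ltnNge; apply/negP => Hle; apply: Hn'; by exists t.
pose nk k := proj1_sig (constructive_indefinite_description _ (Hb k)).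
have Hnk k := proj2_sig (constructive_indefinite_description _ (Hb k)).
have [t [Hc Hs]] := Ph (\max_(k : K) nk k).+1.
case: t Hc Hs => [|[s f] t] //= Hc Hs.
have Hm : move_ok l h s f by apply: (Hc h).
have Hsucc : successor g s f.
  case: Hm => _ [_ [[Hp _] _]].
  exact: (succ_path_rcons _ _ _ Hp).
pose k : K := (s, supp f, [set q | isinf (f q)]).
have Hek : enc k = (s, f) by rewrite /enc /= -succ_enc.
have H3 : consistent l (rcons h (enc k) ++ t) by rewrite Hek cat_rcons.
have := Hnk k t H3.
have := @leq_bigmax _ nk k.
move=> H1 H2; move: Hs; rewrite ltnS => Hs; have := leq_trans H2 H1; by rewrite ltnNge Hs.
Qed.

Theorem lemma2 (G : mpglo) (HG : wf_mpglo G) (l : strategy G) :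
  winning l -> exists N : nat, forall p : play G, is_play l p -> play_len_le p N.
Proof.
move=> Hw; apply: NNPP => Hno.
have Hinf : forall u, ~ is_play l (InfPlay u).
  move=> u Hp; clear Hno.
  have [n Hn] : exists n, TE (mkseq u n) \/ TA (mkseq u n).
    case: l Hw Hp => e Hw Hp; have [n Hn] := Hw _ Hp; exists n; [left|right]; exact: Hn.
  by case: (Hp n) => H1 [H2 _]; case: Hn.
have P0 : Pext l [::].
  move=> n; apply: NNPP => Hn; apply: Hno; exists n; case=> [h|u] Hp; last by case: (Hinf u).
  case: Hp => Hc _ /=; rewrite leqNgt; apply/negP => Hlt; apply: Hn.
  by exists h; split => //; apply: ltnW.
pose S := {h : hist G | Pext l h}.
pose ch (x : S) := constructive_indefinite_description _ (step _ _ (proj2_sig x)).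
pose next (x : S) : S := exist _ (rcons (proj1_sig x) (proj1_sig (ch x)))
                                  (proj2 (proj2_sig (ch x))).
pose hs n := iter n next (exist _ [::] P0).
pose u n := proj1_sig (ch (hs n)).
have Hmk : forall n, mkseq u n = proj1_sig (hs n).
  elim=> [|n IH] //; by rewrite mkseqS IH.
apply: (Hinf u) => n /=; rewrite Hmk.
exact: proj1 (proj2_sig (ch (hs n))).
Qed.
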